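(* Let $<:$ be the subtyping relation on types described in the context. Then the following hold. (1) For every type $T$: if $\mathtt{HL} <: T$ then $T=\mathtt{HL}$. (2) For every type $T$: if $\mathtt{LL} <: T$ then $T=\mathtt{LL}$ or $T=\mathtt{HL}$. (3) For every type $T$: if $\mathtt{HH} <: T$ then $T=\mathtt{HH}$ or $T=\mathtt{HL}$. (4) For all types $T_1,T_2,T_3$: if $T_1 * T_2 <: T_3$ then $T_3\in\{\mathtt{LL},\mathtt{HL},\mathtt{HH}\}$ or there exist types $T_4,T_5$ with $T_3=T_4*T_5$. (5) For all types $T,T_1,T_2$: if $T <: T_1*T_2$ then there exist $T_1',T_2'$ with $T=T_1'*T_2'$, $T_1'<: T_1$ and $T_2'<: T_2$. (6) For all $T_1,T_2$: if $T_1*T_2 <: \mathtt{LL}$ then $T_1<:\mathtt{LL}$ and $T_2<:\mathtt{LL}$. (7) For all $T_1,T_2$: if $T_1*T_2 <: \mathtt{HH}$ then $T_1<:\mathtt{HH}$ or $T_2<:\mathtt{HH}$. (8) For all $T_1,T_2$ and keys $k$: if $T_1 <: (T_2)_k$ then there exists $T_3<: T_2$ with $T_1=(T_3)_k$. (9) For all $T_1,T_2$ and keys $k$: if $T_1 <: \{T_2\}_k$ then there exists $T_3<: T_2$ with $T_1=\{T_3\}_k$. (10) For all $T_1,T_2$ and keys $k$: if $(T_1)_k <: T_2$ then $T_2=\mathtt{HL}$, or there exists $T_3$ with $T_1<: T_3$ and $T_2=(T_3)_k$. (11) For all $T_1,T_2$ and keys $k$: if $\{T_1\}_k <: T_2$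 then $T_2=\mathtt{HL}$, or there exists $T_3$ with $T_1<: T_3$ and $T_2=\{T_3\}_k$. (12) For every type $T$ and every refinement type $R=\llbracket \tau^{l,a}_m ; \tau^{l',a}_n\rrbracket$: if $T<: R$ then $T=R$. (13) For every type $T$ and every refinement type $R=\llbracket \tau^{l,a}_m ; \tau^{l',a}_n\rrbracket$: if $R<: T$ then $T=\mathtt{HL}$ or $T=R$. (14) For all types $T_1,T_2$: if $T_1<: T_2$ then $T_2=\mathtt{HL}$, or $T_1=T_2$, or neither $T_1$ nor $T_2$ is a union type (i.e. of the form $T'\vee T''$). (15) For all types $T,T'$ and labels $l$: if $T<: \mathrm{key}^l(T')$ then $T=\mathrm{key}^l(T')$. (16) For every type $T$: if $T<:\mathtt{LL}$ then $T$ is a pair type (of the form $T'*T''$), or $T=\mathrm{key}^{\mathtt{LL}}(T')$ for some $T'$, or $T=\mathtt{LL}$. (17) For every type $T$: if $T<:\mathtt{HH}$ then $T$ is a pair type, or $T=\mathrm{key}^{\mathtt{HH}}(T')$ for some $T'$, or $T=\mathtt{HH}$.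
   Context: Security labels are $l\in\{\mathtt{LL},\mathtt{HL},\mathtt{HH}\}$. Fix a set of names and a set of keys. Types are generated by the grammar $T ::= l \mid T*T \mid \mathrm{key}^l(T) \mid (T)_k \mid \{T\}_k \mid \llbracket \tau^{l,a}_m ; \tau^{l',a}_n\rrbracket \mid T\vee T$, where $k$ ranges over keys, $m,n$ over names, $a\in\{1,\infty\}$, and $\tau^{l,a}_n$ is a nonce type; types of the form $T'*T''$ are called pair types, types $\llbracket \tau^{l,a}_m ; \tau^{l',a}_n\rrbracket$ refinement types, and types $T'\vee T''$ union types. The subtyping relation $<:$ is the smallest binary relation on types closed under the rules: $T<: T$; $T<:\mathtt{HL}$; if $T<: T'$ and $T'<: T''$ then $T<: T''$; $\mathtt{LL}*\mathtt{LL}<:\mathtt{LL}$; if $T_1<: T_1'$ and $T_2<: T_2'$ then $T_1*T_2<: T_1'*T_2'$; $\mathtt{HH}*T<:\mathtt{HH}$; $T*\mathtt{HH}<:\mathtt{HH}$; $\mathrm{key}^l(T)<: l$; if $T<: T'$ then $(T)_k<:(T')_k$; if $T<: T'$ then $\{T\}_k<:\{T'\}_k$. *)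

(* Defs.v *)
Inductive label : Type := LL | HL | HH.
Inductive affinity : Type := Aone | Ainf.

Section Types.
Variables (Name Key : Type).

Inductive ty : Type :=
| TLab  : label -> ty
| TPair : ty -> ty -> ty
| TKey  : label -> ty -> ty
| TEncS : ty -> Key -> ty
| TEncA : ty -> Key -> ty
| TRef  : label -> label -> affinity -> Name -> Name -> ty
    (* [[ tau^{l,a}_m ; tau^{l',a}_n ]] : TRef l l' a m n *)
| TOr   : ty -> ty -> ty.

Inductive subtype : ty -> ty -> Prop :=
| ST_refl  : forall T, subtype T T
| ST_HL    : forall T, subtype T (TLab HL)
| ST_trans : forall T T' T'', subtype T T' -> subtype T' T'' -> subtype T T''
| ST_LLpair : subtype (TPair (TLab LL) (TLab LL)) (TLab LL)
| ST_pair  : forall T1 T1' T2 T2', subtype T1 T1' -> subtype T2 T2' ->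
               subtype (TPair T1 T2) (TPair T1' T2')
| ST_HHl   : forall T, subtype (TPair (TLab HH) T) (TLab HH)
| ST_HHr   : forall T, subtype (TPair T (TLab HH)) (TLab HH)
| ST_key   : forall l T, subtype (TKey l T) (TLab l)
| ST_encS  : forall T T' k, subtype T T' -> subtype (TEncS T k) (TEncS T' k)
| ST_encA  : forall T T' k, subtype T T' -> subtype (TEncA T k) (TEncA T' k).

Definition is_pair (T : ty) : Prop := exists T1 T2, T = TPair T1 T2.
Definition is_union (T : ty) : Prop := exists T1 T2, T = TOr T1 T2.
End Types.

Arguments TLab {Name Key}.
Arguments TPair {Name Key}.
Arguments TKey {Name Key}.
Arguments TEncS {Name Key}.
Arguments TEncA {Name Key}.
Arguments TRef {Name Key}.
Arguments TOr {Name Key}.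
Arguments subtype {Name Key}.
Arguments is_pair {Name Key}.
Arguments is_union {Name Key}.

(* Main.v *)
Require Import Defs.

Section S.
Variables Name Key : Type.
Notation T := (ty Name Key).

Lemma up_HL (S U : T) : subtype S U -> S = TLab HL -> U = TLab HL.
Proof. induction 1; intros; subst; try discriminate; auto. Qed.

Lemma up_LL (S U : T) : subtype S U -> S = TLab LL -> U = TLab LL \/ U = TLab HL.
Proof. induction 1; intros; subst; try discriminate; auto.
 destruct (IHsubtype1 eq_refl); subst; auto. right; eapply up_HL; eauto. Qed.

Lemma up_HH (S U : T) : subtype S U -> S = TLab HH -> U = TLab HH \/ U = TLab HL.
Proof. induction 1; intros; subst; try discriminate; auto.
 destruct (IHsubtype1 eq_refl); subst; auto. right; eapply up_HL; eauto. Qed.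

Lemma up_pair (S U : T) : subtype S U -> ((exists l, S = TLab l) \/ is_pair S) ->
  ((exists l, U = TLab l) \/ is_pair U).
Proof. induction 1; intros Hs; eauto;
 try (right; do 2 eexists; reflexivity);
 try (destruct Hs as [[l' E]|[a[b E]]]; discriminate).
Qed.

Lemma down_pair (S U : T) : subtype S U -> forall T1 T2, U = TPair T1 T2 ->
  exists T1' T2', S = TPair T1' T2' /\ subtype T1' T1 /\ subtype T2' T2.
Proof. induction 1; intros; subst; try discriminate.
 - do 2 eexists; split; [reflexivity| split; constructor].
 - destruct (IHsubtype2 _ _ eq_refl) as (a&b&E&H1&H2). subst.
   destruct (IHsubtype1 _ _ eq_refl) as (c&d&E&H3&H4). subst.
   do 2 eexists; split; [reflexivity|split; eapply ST_trans; eauto].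
 - injection H1; intros; subst. do 2 eexists; eauto.
Qed.

Inductive lowLL : T -> Prop :=
| lL_LL : lowLL (TLab LL)
| lL_key : forall U, lowLL (TKey LL U)
| lL_pair : forall a b, lowLL a -> lowLL b -> lowLL (TPair a b).

Inductive lowHH : T -> Prop :=
| lH_HH : lowHH (TLab HH)
| lH_key : forall U, lowHH (TKey HH U)
| lH_l : forall a b, lowHH a -> lowHH (TPair a b)
| lH_r : forall a b, lowHH b -> lowHH (TPair a b).

Lemma lowLL_down (S U : T) : subtype S U -> lowLL U -> lowLL S.
Proof. induction 1; intros Hl; auto; try (inversion Hl; fail).
 - repeat constructor.
 - inversion Hl; subst; constructor; auto.
 - inversion Hl; subst; constructor.
Qed.

Lemma lowHH_down (S U : T) : subtype S U -> lowHH U -> lowHH S.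
Proof. induction 1; intros Hl; auto; try (inversion Hl; fail).
 - inversion Hl; subst; [apply lH_l|apply lH_r]; auto.
 - apply lH_l; constructor.
 - apply lH_r; constructor.
 - inversion Hl; subst; constructor.
Qed.

Lemma lowLL_sub (S : T) : lowLL S -> subtype S (TLab LL).
Proof. induction 1.
 - constructor.
 - constructor.
 - eapply ST_trans; [apply ST_pair; eauto| constructor].
Qed.

Lemma lowHH_sub (S : T) : lowHH S -> subtype S (TLab HH).
Proof. induction 1.
 - constructor.
 - constructor.
 - eapply ST_trans; [apply ST_pair; [eauto|apply ST_refl]| constructor].
 - eapply ST_trans; [apply ST_pair; [apply ST_refl|eauto]| constructor].
Qed.

Lemma down_encS (S U : T) : subtype S U -> forall T2 k, U = TEncS T2 k ->
  exists T3, subtype T3 T2 /\ S = TEncS T3 k.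
Proof. induction 1; intros; subst; try discriminate.
 - eexists; split; [constructor|reflexivity].
 - destruct (IHsubtype2 _ _ eq_refl) as (a&H1&E); subst.
   destruct (IHsubtype1 _ _ eq_refl) as (b&H2&E); subst.
   eexists; split; [eapply ST_trans; eauto|reflexivity].
 - injection H0; intros; subst; eauto.
Qed.

Lemma down_encA (S U : T) : subtype S U -> forall T2 k, U = TEncA T2 k ->
  exists T3, subtype T3 T2 /\ S = TEncA T3 k.
Proof. induction 1; intros; subst; try discriminate.
 - eexists; split; [constructor|reflexivity].
 - destruct (IHsubtype2 _ _ eq_refl) as (a&H1&E); subst.
   destruct (IHsubtype1 _ _ eq_refl) as (b&H2&E); subst.
   eexists; split; [eapply ST_trans; eauto|reflexivity].
 - injection H0; intros; subst; eauto.
Qed.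

Lemma up_encS (S U : T) : subtype S U -> forall T1 k, S = TEncS T1 k ->
  U = TLab HL \/ exists T3, subtype T1 T3 /\ U = TEncS T3 k.
Proof. induction 1; intros; subst; try discriminate; auto.
 - right; eexists; split; [constructor|reflexivity].
 - destruct (IHsubtype1 _ _ eq_refl) as [E|(a&H1&E)]; subst.
   + left; eapply up_HL; eauto.
   + destruct (IHsubtype2 _ _ eq_refl) as [E|(b&H2&E)]; subst; auto.
     right; eexists; split; [eapply ST_trans; eauto|reflexivity].
 - injection H0; intros; subst; right; eauto.
Qed.

Lemma up_encA (S U : T) : subtype S U -> forall T1 k, S = TEncA T1 k ->
  U = TLab HL \/ exists T3, subtype T1 T3 /\ U = TEncA T3 k.
Proof. induction 1; intros; subst; try discriminate; auto.
 - right; eexists; split; [constructor|reflexivity].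
 - destruct (IHsubtype1 _ _ eq_refl) as [E|(a&H1&E)]; subst.
   + left; eapply up_HL; eauto.
   + destruct (IHsubtype2 _ _ eq_refl) as [E|(b&H2&E)]; subst; auto.
     right; eexists; split; [eapply ST_trans; eauto|reflexivity].
 - injection H0; intros; subst; right; eauto.
Qed.

Lemma down_ref (S U : T) : subtype S U -> forall l l' a m n, U = TRef l l' a m n -> S = U.
Proof. induction 1; intros; subst; try discriminate; auto.
 rewrite (IHsubtype2 _ _ _ _ _ eq_refl) in *. eapply IHsubtype1; eauto. Qed.

Lemma up_ref (S U : T) : subtype S U -> forall l l' a m n, S = TRef l l' a m n -> U = TLab HL \/ U = S.
Proof. induction 1; intros; subst; try discriminate; auto.
 destruct (IHsubtype1 _ _ _ _ _ eq_refl) as [E|E]; subst.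
 - left; eapply up_HL; eauto.
 - eapply IHsubtype2; eauto. Qed.

Lemma down_key (S U : T) : subtype S U -> forall l V, U = TKey l V -> S = U.
Proof. induction 1; intros; subst; try discriminate; auto.
 rewrite (IHsubtype2 _ _ eq_refl) in *. eapply IHsubtype1; eauto. Qed.

Lemma union_lem (S U : T) : subtype S U ->
  U = TLab HL \/ S = U \/ (~ is_union S /\ ~ is_union U).
Proof.
 assert (NU: forall X : T, ~ is_union X -> True) by auto.
 induction 1; auto;
 try (right; right; split; intros (a&b&E); discriminate).
 destruct IHsubtype2 as [E|[E|[N1 N2]]]; auto.
all: destruct IHsubtype1 as [E'|[E'|[N3 N4]]]; subst; auto;
   left; eapply up_HL; eauto.
Qed.
End S.
Theorem lemmaB1 (Name Key : Type) :
  (* (1) *)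
  (forall T : ty Name Key, subtype (TLab HL) T -> T = TLab HL) /\
  (* (2) *)
  (forall T : ty Name Key, subtype (TLab LL) T -> T = TLab LL \/ T = TLab HL) /\
  (* (3) *)
  (forall T : ty Name Key, subtype (TLab HH) T -> T = TLab HH \/ T = TLab HL) /\
  (* (4) *)
  (forall T1 T2 T3 : ty Name Key, subtype (TPair T1 T2) T3 ->
     (T3 = TLab LL \/ T3 = TLab HL \/ T3 = TLab HH) \/
     exists T4 T5, T3 = TPair T4 T5) /\
  (* (5) *)
  (forall T T1 T2 : ty Name Key, subtype T (TPair T1 T2) ->
     exists T1' T2', T = TPair T1' T2' /\ subtype T1' T1 /\ subtype T2' T2) /\
  (* (6) *)
  (forall T1 T2 : ty Name Key, subtype (TPair T1 T2) (TLab LL) ->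
     subtype T1 (TLab LL) /\ subtype T2 (TLab LL)) /\
  (* (7) *)
  (forall T1 T2 : ty Name Key, subtype (TPair T1 T2) (TLab HH) ->
     subtype T1 (TLab HH) \/ subtype T2 (TLab HH)) /\
  (* (8) *)
  (forall (T1 T2 : ty Name Key) (k : Key), subtype T1 (TEncS T2 k) ->
     exists T3, subtype T3 T2 /\ T1 = TEncS T3 k) /\
  (* (9) *)
  (forall (T1 T2 : ty Name Key) (k : Key), subtype T1 (TEncA T2 k) ->
     exists T3, subtype T3 T2 /\ T1 = TEncA T3 k) /\
  (* (10) *)
  (forall (T1 T2 : ty Name Key) (k : Key), subtype (TEncS T1 k) T2 ->
     T2 = TLab HL \/ exists T3, subtype T1 T3 /\ T2 = TEncS T3 k) /\
  (* (11) *)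
  (forall (T1 T2 : ty Name Key) (k : Key), subtype (TEncA T1 k) T2 ->
     T2 = TLab HL \/ exists T3, subtype T1 T3 /\ T2 = TEncA T3 k) /\
  (* (12) *)
  (forall (T : ty Name Key) (l l' : label) (a : affinity) (m n : Name),
     subtype T (TRef l l' a m n) -> T = TRef l l' a m n) /\
  (* (13) *)
  (forall (T : ty Name Key) (l l' : label) (a : affinity) (m n : Name),
     subtype (TRef l l' a m n) T -> T = TLab HL \/ T = TRef l l' a m n) /\
  (* (14) *)
  (forall T1 T2 : ty Name Key, subtype T1 T2 ->
     T2 = TLab HL \/ T1 = T2 \/ (~ is_union T1 /\ ~ is_union T2)) /\
  (* (15) *)
  (forall (T T' : ty Name Key) (l : label), subtype T (TKey l T') -> T = TKey l T') /\
  (* (16) *)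
  (forall T : ty Name Key, subtype T (TLab LL) ->
     is_pair T \/ (exists T', T = TKey LL T') \/ T = TLab LL) /\
  (* (17) *)
  (forall T : ty Name Key, subtype T (TLab HH) ->
     is_pair T \/ (exists T', T = TKey HH T') \/ T = TLab HH).
Proof.
 refine (conj _ (conj _ (conj _ (conj _ (conj _ (conj _ (conj _ (conj _ (conj _ (conj _ (conj _ (conj _ (conj _ (conj _ (conj _ (conj _ (_))))))))))))))))).
 - intros; eapply up_HL; eauto.
 - intros; eapply up_LL; eauto.
 - intros; eapply up_HH; eauto.
 - intros T1 T2 T3 H. destruct (up_pair _ _ _ _ H (or_intror (ex_intro _ T1 (ex_intro _ T2 eq_refl)))) as [[l E]|P].
   + subst; left; destruct l; auto.
   + right; exact P.
 - intros; eapply down_pair; eauto.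
 - intros T1 T2 H. pose proof (lowLL_down _ _ _ _ H (lL_LL _ _)) as L; inversion L; subst; split; apply lowLL_sub; auto.
 - intros T1 T2 H. pose proof (lowHH_down _ _ _ _ H (lH_HH _ _)) as L; inversion L; subst; [left|right]; apply lowHH_sub; auto.
 - intros; eapply down_encS; eauto.
 - intros; eapply down_encA; eauto.
 - intros; eapply up_encS; eauto.
 - intros; eapply up_encA; eauto.
 - intros; eapply down_ref; eauto.
 - intros. destruct (up_ref _ _ _ _ H _ _ _ _ _ eq_refl); auto.
 - intros; eapply union_lem; eauto.
 - intros; eapply down_key; eauto.
 - intros S H. pose proof (lowLL_down _ _ _ _ H (lL_LL _ _)) as L; inversion L; subst; eauto.
   left; do 2 eexists; eauto.
 - intros S H. pose proof (lowHH_down _ _ _ _ H (lH_HH _ _)) as L; inversion L; subst; eauto;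
   left; do 2 eexists; eauto.
Qed.
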